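(* Let $G$ be a group acting on the binary tree. If $G$ contains a weakly branch group, then $G$ is weakly branch. If $G$ contains a subgroup $H$ such that, for every $n\in\mathbb N$, $(\mho_2)^n(H)$ acts transitively on every subtree at level $n$, then $G$ is saturated.
   Context: The binary tree is $\mathcal T=X^*$, $X=\{0,1\}$, with isometry group $W$; $G\le W$. For $v\in X^*$, $g\in W$: $v*g$ acts as $g$ on the subtree $v\mathcal T$ and fixes other vertices; $g@v$ is the state, $(vw)^g=v^gw^{g@v}$. $G$ is level-transitive if transitive on each $X^n$; weakly branch if level-transitive and $(v*G)\cap G\ne1$ for all $v\in X^*$; saturated if for every $n$ it contains a characteristic subgroup $H_n$ fixing $X^n$ with $\{h@v:h\in H_n\}$ level-transitive for all $v\in X^n$. $\mho_2(H)$ is the subgroup generated by squares of elements of $H$, and $(\mho_2)^n$ its $n$-fold iterate. ''Acts transitively on every subtree at level $n$'' means that for each $v\in X^n$ the group fixes $v$ and its restriction to $v\mathcal T$ is level-transitive. *)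

(* Defs.v *)
From mathcomp Require Import all_boot.
Set Implicit Arguments. Unset Strict Implicit. Unset Printing Implicit Defensive.

(* Vertices of the binary tree T = X^*, X = {0,1}, encoded as bool lists;
   the level of v is size v. *)
Definition vertex := seq bool.

Definition tmap := vertex -> vertex.

Definition is_tree_aut (f : tmap) : Prop :=
  bijective f /\
  (forall v, size (f v) = size v) /\
  (forall v w, take (size v) (f (v ++ w)) = f v).

Definition W (f : tmap) : Prop := is_tree_aut f.

(* Right action convention: v^(g h) = (v^g)^h. *)
Definition tmul (g h : tmap) : tmap := fun v => h (g v).
Definition tid : tmap := fun v => v.

Definition tset := tmap -> Prop.
Definition tsubset (A B : tset) : Prop := forall g, A g -> B g.

Definition subgroupW (K : tset) : Prop :=
  tsubset K W /\ K tid /\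
  (forall g h, K g -> K h -> K (tmul g h)) /\
  (forall g, K g -> exists h, K h /\ tmul g h = tid /\ tmul h g = tid).

Definition vstar (v : vertex) (g : tmap) : tmap := fun w =>
  if take (size v) w == v then v ++ g (drop (size v) w) else w.

(* state g@v, defined by (vw)^g = v^g w^(g@v). *)
Definition state (g : tmap) (v : vertex) : tmap := fun w =>
  drop (size v) (g (v ++ w)).

Definition level_transitive (K : tset) : Prop :=
  forall (n : nat) (u w : vertex), size u = n -> size w = n ->
    exists g, K g /\ g u = w.

Definition weakly_branch (G : tset) : Prop :=
  level_transitive G /\
  forall v : vertex, exists g, G g /\ G (vstar v g) /\ vstar v g <> tid.

Definition group_aut (G : tset) (phi : tmap -> tmap) : Prop :=
  (forall g, G g -> G (phi g)) /\
  (forall g h, G g -> G h -> phi g = phi h -> g = h) /\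
  (forall g, G g -> exists h, G h /\ phi h = g) /\
  (forall g h, G g -> G h -> phi (tmul g h) = tmul (phi g) (phi h)).

Definition characteristic (H G : tset) : Prop :=
  subgroupW H /\ tsubset H G /\
  forall phi, group_aut G phi -> forall h, H h -> H (phi h).

Definition fixes_level (H : tset) (n : nat) : Prop :=
  forall h v, H h -> size v = n -> h v = v.

Definition states_at (H : tset) (v : vertex) : tset :=
  fun k => exists h, H h /\ k = state h v.

Definition saturated (G : tset) : Prop :=
  forall n : nat, exists Hn : tset,
    characteristic Hn G /\ fixes_level Hn n /\
    forall v : vertex, size v = n -> level_transitive (states_at Hn v).

Definition generated (S : tset) : tset :=
  fun g => forall K, subgroupW K -> tsubset S K -> K g.

Definition mho2 (H : tset) : tset :=
  generated (fun g => exists h, H h /\ g = tmul h h).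

(* K acts transitively on every subtree at level n: K fixes every v in X^n
   and its restriction to vT is level-transitive. *)
Definition transitive_on_subtrees (K : tset) (n : nat) : Prop :=
  fixes_level K n /\
  forall v : vertex, size v = n -> level_transitive (states_at K v).

(* Main.v *)
Require Import Defs.
From mathcomp Require Import all_boot.
Set Implicit Arguments. Unset Strict Implicit.

Lemma inv_uniq g h h' : tmul g h = tid -> tmul h' g = tid -> h = h'.
Proof.
move=> e1 e2.
have e : tmul (tmul h' g) h = tmul h' (tmul g h) by [].
rewrite e1 e2 in e; exact e.
Qed.

Lemma gen_sub S K : subgroupW K -> tsubset S K -> tsubset (generated S) K.
Proof. by move=> hK hS g hg; apply: hg. Qed.

Lemma gen_incl S : tsubset S (generated S).
Proof. by move=> g hg K _ hS; apply: hS. Qed.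

Lemma gen_group S K0 : subgroupW K0 -> tsubset S K0 -> subgroupW (generated S).
Proof.
move=> hK0 hS. split; first by move=> g hg; exact: hK0.1 _ (hg _ hK0 hS).
split; first by move=> K [_ [? _]] _.
split.
  move=> g h hg hh K hK hSK; exact: hK.2.2.1 _ _ (hg K hK hSK) (hh K hK hSK).
move=> g hg. have [h [hh [e1 e2]]] := hK0.2.2.2 g (hg _ hK0 hS).
exists h; split=> //. move=> K hK hSK.
have [h' [hh' [e1' e2']]] := hK.2.2.2 g (hg _ hK hSK).
by rewrite (@inv_uniq g h h' e1 e2').
Qed.

Lemma sq_sub K : subgroupW K -> tsubset (fun g => exists h, K h /\ g = tmul h h) K.
Proof. by move=> hK g [h [hh ->]]; apply: hK.2.2.1. Qed.

Lemma mho2_sub K : subgroupW K -> tsubset (mho2 K) K.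
Proof. move=> hK; rewrite /mho2; exact: (gen_sub hK (sq_sub hK)). Qed.

Lemma mho2_group K : subgroupW K -> subgroupW (mho2 K).
Proof. move=> hK; rewrite /mho2; exact: (gen_group hK (sq_sub hK)). Qed.

Lemma mho2_mono A B : tsubset A B -> tsubset (mho2 A) (mho2 B).
Proof.
move=> hAB g hg K hK hS. apply: hg hK _. move=> x [h [hh ->]].
apply: hS. exists h; split=> //; exact: hAB.
Qed.

Lemma iter_mono n A B : tsubset A B -> tsubset (iter n mho2 A) (iter n mho2 B).
Proof. move=> hAB; elim: n => [|n IH] //=; exact: mho2_mono. Qed.

Lemma iter_group n K : subgroupW K ->
  subgroupW (iter n mho2 K) /\ tsubset (iter n mho2 K) K.
Proof.
move=> hK; elim: n => [|n [IH1 IH2]] /=; first by split.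
split; first exact: mho2_group.
move=> g hg; apply: IH2; exact: mho2_sub IH1 _ hg.
Qed.

Lemma sq_fix k g : W g -> (forall v, size v = k -> g v = v) ->
  forall v, size v = k.+1 -> g (g v) = v.
Proof.
move=> hW hfix v hv.
have hinj : injective g by case: hW => [[f c1 c2] _]; exact: can_inj c1.
case/lastP: v hv => [|u b] //. rewrite size_rcons => -[hu].
have key : forall c, exists d, g (rcons u c) = rcons u d.
  move=> c.
  have hs : size (g (rcons u c)) = (size u).+1 by rewrite hW.2.1 size_rcons.
  have ht : take (size u) (g (u ++ [:: c])) = u by rewrite hW.2.2 hfix.
  rewrite cats1 in ht.
  move: hs ht; case/lastP: (g (rcons u c)) => [|y d] //.
  rewrite size_rcons => -[hy]. rewrite -cats1 -hy take_size_cat // => ->.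
  by exists d; rewrite cats1.
have neq : rcons u true <> rcons u false.
  by move=> e; have := congr1 (fun s => last true s) e; rewrite !last_rcons.
have [d1 e1] := key b. have [d2 e2] := key d1.
rewrite e1 e2.
case: b d1 d2 e1 e2 => [] [] [] e1 e2 //.
- by exfalso; apply: neq; rewrite -e1 -e2.
- by exfalso; apply: neq; rewrite -e1; apply: hinj; rewrite e1 e2.
- by exfalso; apply: neq; apply: hinj; rewrite e1 e2.
- by exfalso; apply: neq; rewrite -e1 -e2.
Qed.

Lemma iter_fix G n : subgroupW G -> fixes_level (iter n mho2 G) n.
Proof.
move=> hG; elim: n => [|n IH] /=.
  move=> g v hg /size0nil ->. apply/size0nil. by rewrite (hG.1 _ hg).2.1.
have [hK _] := iter_group n hG.
set K := iter n mho2 G in IH hK *.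
pose L := fun g => K g /\ forall v, size v = n.+1 -> g v = v.
have hL : subgroupW L.
  split; first by move=> g [hg _]; exact: hK.1.
  split; first by split=> //; exact: hK.2.1.
  split.
    move=> g h [hg fg] [hh fh]; split; first exact: hK.2.2.1.
    by move=> v hv; rewrite /tmul fg // fh.
  move=> g [hg fg]. have [h [hh [e1 e2]]] := hK.2.2.2 g hg.
  exists h; split=> //. split=> // v hv.
  have := congr1 (fun f => f v) e1. by rewrite /tmul /tid fg.
have hsq : tsubset (fun g => exists h, K h /\ g = tmul h h) L.
  move=> g [h [hh ->]]; split; first exact: hK.2.2.1.
  move=> v hv; rewrite /tmul. exact: (@sq_fix n h (hK.1 _ hh) (fun w hw => IH h w hh hw) v hv).
move=> g v hg hv. exact: ((gen_sub hL hsq) g hg).2 v hv.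
Qed.

Lemma aut_id G phi : subgroupW G -> group_aut G phi -> phi tid = tid.
Proof.
move=> hG [hmap [_ [_ hom]]].
have [h [hh [e1 e2]]] := hG.2.2.2 _ (hmap _ hG.2.1).
have e : phi tid = tmul (phi tid) (phi tid) by rewrite -hom //; exact: hG.2.1.
have e3 : tmul (tmul (phi tid) (phi tid)) h = tmul (phi tid) (tmul (phi tid) h) by [].
rewrite -e e1 in e3. exact: (esym e3).
Qed.

Lemma mho2_inv G phi K : subgroupW G -> group_aut G phi -> subgroupW K ->
  tsubset K G -> (forall g, K g -> K (phi g)) ->
  forall g, mho2 K g -> mho2 K (phi g).
Proof.
move=> hG hphi hK hKG hKphi.
have hM := mho2_group hK.
case: (hphi) => [hmap [_ [_ hom]]].
pose L := fun g => G g /\ mho2 K (phi g).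
have hL : subgroupW L.
  split; first by move=> g [hg _]; exact: hG.1.
  split; first by split; [exact: hG.2.1 | rewrite (aut_id hG hphi); exact: hM.2.1].
  split.
    move=> g h [hg pg] [hh ph]; split; first exact: hG.2.2.1.
    rewrite hom //; exact: hM.2.2.1.
  move=> g [hg pg]. have [h [hh [e1 e2]]] := hG.2.2.2 g hg.
  exists h; split=> //. split=> //.
  have [h' [hh' [e1' e2']]] := hM.2.2.2 _ pg.
  have f1 : tmul (phi g) (phi h) = tid by rewrite -hom // e1 (aut_id hG hphi).
  by rewrite (@inv_uniq (phi g) (phi h) h' f1 e2').
have hsq : tsubset (fun g => exists h, K h /\ g = tmul h h) L.
  move=> g [h [hh ->]]. split; first by apply: hG.2.2.1; exact: hKG.
  rewrite hom; try exact: hKG.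
  apply: gen_incl. exists (phi h); split=> //; exact: hKphi.
move=> g hg. exact: ((gen_sub hL hsq) g hg).2.
Qed.

Lemma iter_inv G phi n : subgroupW G -> group_aut G phi ->
  forall g, iter n mho2 G g -> iter n mho2 G (phi g).
Proof.
move=> hG hphi; elim: n => [|n IH] /=; first exact: hphi.1.
have [hK hKG] := iter_group n hG.
exact: mho2_inv hG hphi hK hKG IH.
Qed.

Theorem lemma3p9 (G : tset) (hG : subgroupW G) :
  ((exists K : tset, subgroupW K /\ tsubset K G /\ weakly_branch K) ->
     weakly_branch G) /\
  ((exists H : tset, subgroupW H /\ tsubset H G /\
      forall n : nat, transitive_on_subtrees (iter n mho2 H) n) ->
     saturated G).
Proof.
split.
  move=> [K [hK [hKG [hlt hv]]]]. split.
    move=> n u w hu hw. have [g [hg e]] := hlt n u w hu hw.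
    by exists g; split=> //; apply: hKG.
  move=> v. have [g [hg [hg2 hne]]] := hv v.
  by exists g; split; [apply: hKG | split; [apply: hKG|]].
move=> [H [hH [hHG htr]]] n. exists (iter n mho2 G).
have [hK hKG] := iter_group n hG.
split; first by split=> //; split=> // phi hphi; exact: iter_inv.
split; first exact: iter_fix.
move=> v hv m u w hu hw.
have [g [[h [hh ->]] e]] := (htr n).2 v hv m u w hu hw.
exists (state h v); split=> //. exists h; split=> //.
exact: (@iter_mono n H G hHG h hh).
Qed.
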